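(* Let $(m_n)$ be a sequence of positive integers and $V_n\subseteq GF(2)^{m_n}$ linear subspaces. If $|\mathcal{A}_1(V_n)|\to\infty$ as $n\to\infty$, then the sequence $(V_n)$ has a uniform weight spectrum.
   Context: The weight ${\rm wt}(x)$ of $x\in GF(2)^m$ is the number of nonzero coordinates; for $W\subseteq GF(2)^m$, $\mathcal{A}_i(W)=\{x\in W:{\rm wt}(x)=i\}$. For a linear subspace $V\subseteq GF(2)^m$ let $\alpha(V)=\max_{i,\,x}\frac{|\mathcal{A}_i(V+x)|}{|V|}$, the maximum over all $i$ and all $x\in GF(2)^m$. A sequence of subspaces $V_n\subseteq GF(2)^{m_n}$ has a uniform weight spectrum if $\alpha(V_n)\to0$ as $n\to\infty$. *)

(* Defs.v *)
From HB Require Import structures.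
From mathcomp Require Import all_boot all_order all_algebra.
Set Implicit Arguments. Unset Strict Implicit. Unset Printing Implicit Defensive.
Import Order.TTheory GRing.Theory Num.Theory.
Local Open Scope ring_scope.

Definition wt (m : nat) (x : 'rV['F_2]_m) : nat := #|[set j | x 0 j != 0]|.

Definition cosetA (m : nat) (V : {vspace 'rV['F_2]_m}) (x : 'rV['F_2]_m) (i : nat) : nat :=
  #|[set y : 'rV['F_2]_m | (y - x \in V) && (wt y == i)]|.

Definition A (m : nat) (V : {vspace 'rV['F_2]_m}) (i : nat) : nat := cosetA V 0 i.

Definition card_vs (m : nat) (V : {vspace 'rV['F_2]_m}) : nat :=
  #|[set y : 'rV['F_2]_m | y \in V]|.

(* alpha(V) = max_{i, x} |A_i(V+x)| / |V|  (as a rational number).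
   Weights lie in 0..m, so ranging i over 'I_(m.+1) covers all nonzero terms. *)
Definition alpha (m : nat) (V : {vspace 'rV['F_2]_m}) : rat :=
  \big[Num.max/0]_(i < m.+1) \big[Num.max/0]_(x : 'rV['F_2]_m)
     ((cosetA V x i)%:R / (card_vs V)%:R).

Definition uniform_weight_spectrum (m : nat -> nat)
  (V : forall n, {vspace 'rV['F_2]_(m n)}) : Prop :=
  forall eps : rat, 0 < eps -> exists N, forall n, (N <= n)%N -> `|alpha (V n)| < eps.

(* Main.v *)
Require Import Defs.
From mathcomp Require Import all_boot all_order all_algebra.
From mathcomp Require Import zify ring.
Import Order.TTheory GRing.Theory Num.Theory.
Lemma bin_step n : n.+1 * 'C(n.+1.*2, n.+1) = 2 * n.*2.+1 * 'C(n.*2, n).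
Proof.
have h2 := mul_bin_left n.*2.+1 n.
have e2 : n.*2.+1 - n = n.+1 by lia.
rewrite e2 in h2.
have h2' : 'C(n.*2.+1, n.+1) = 'C(n.*2.+1, n).
  by apply/eqP; rewrite -(eqn_pmul2l (ltn0Sn n)) h2.
have e1 : n.+1.*2 = (n.*2.+1).+1 by rewrite doubleS.
rewrite e1 binS -h2'.
have h4 := mul_bin_diag n.*2.+1 n. simpl in h4.
nia.
Qed.

Lemma bin_center n : 'C(n.*2, n) ^ 2 * n.*2.+1 <= 16 ^ n.
Proof.
elim: n => [|n IH]; first by [].
have h := bin_step n.
set a := 'C(n.*2, n) in h IH *. set b := 'C(n.+1.*2, n.+1) in h *.
rewrite -(@leq_pmul2l (n.+1 ^ 2)) ?expn_gt0 //.
have -> : n.+1 ^ 2 * (b ^ 2 * n.+1.*2.+1) = (n.+1 * b) ^ 2 * n.+1.*2.+1 by rewrite expnMn mulnA.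
rewrite h expnS.
have q : (2 * n.*2.+1) ^ 2 * n.+1.*2.+1 <= n.+1 ^ 2 * 16 * n.*2.+1 by rewrite -!muln2; nia.
have : (2 * n.*2.+1 * a) ^ 2 * n.+1.*2.+1 = ((2 * n.*2.+1) ^ 2 * n.+1.*2.+1) * a^2 by rewrite expnMn; ring.
move=> ->.
apply: (leq_trans (leq_mul q (leqnn _))).
have : n.+1 ^ 2 * 16 * n.*2.+1 * a ^ 2 = n.+1 ^ 2 * 16 * (a ^ 2 * n.*2.+1) by ring.
move=> ->. by rewrite [16 ^ _]expnS [_ * (16 * _)]mulnA leq_mul.
Qed.

Lemma bin_incr N j : j < N - j -> 'C(N, j) <= 'C(N, j.+1).
Proof.
move=> hj; have h := mul_bin_left N j.
rewrite -(@leq_pmul2l j.+1) // h.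
by rewrite leq_mul2r hj orbT.
Qed.

Lemma bin_le_center n j : 'C(n.*2, j) <= 'C(n.*2, n).
Proof.
have low : forall d, d <= n -> 'C(n.*2, n - d) <= 'C(n.*2, n).
  elim=> [|d IH] hd; first by rewrite subn0.
  apply: leq_trans (IH (ltnW hd)).
  have e : n - d = (n - d.+1).+1 by lia.
  rewrite e; apply: bin_incr; lia.
case: (leqP j n) => hj.
  have := low (n - j) (leq_subr _ _). by rewrite subKn.
case: (leqP j n.*2) => hj2; last by rewrite bin_small.
rewrite -bin_sub //.
have := low (n - (n.*2 - j)) (leq_subr _ _).
rewrite subKn //; lia.
Qed.

Set Implicit Arguments. Unset Strict Implicit. Unset Printing Implicit Defensive.
Local Open Scope ring_scope.

Lemma F2_nat (a : 'F_2) : a = (a != 0)%:R.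
Proof. case: a => [[|[|k]] Hk]; apply/val_inj => //=. Qed.

Definition delta m (j : 'I_m) : 'rV['F_2]_m := \row_l (l == j)%:R.
Definition gS m (S : {set 'I_m}) (z : 'rV['F_2]_m) (U : {set 'I_m}) : 'rV['F_2]_m :=
  \row_l (if l \in S then (l \in U)%:R else z 0 l).
Definition hS m (S : {set 'I_m}) (p : 'rV['F_2]_m * {set 'I_m}) :=
  (gS S p.1 p.2, [set l in S | p.1 0 l != 0]).

Section Core.
Variables (m : nat) (V : {vspace 'rV['F_2]_m}) (S : {set 'I_m}).
Hypothesis hSV : forall j, j \in S -> delta j \in V.

Lemma gS_diff z U : gS S z U - z \in V.
Proof.
have -> : gS S z U - z = \sum_(l in S) (((l \in U)%:R - z 0 l) *: delta l).
  apply/rowP => l; rewrite !mxE summxE.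
  under eq_bigr => j _ do rewrite !mxE.
  case: (boolP (l \in S)) => hl.
    rewrite (bigD1 l) //= eqxx mulr1 big1 ?addr0 // => j /andP [_ hj].
    by rewrite eq_sym (negbTE hj) mulr0.
  rewrite subrr big1 // => j hj.
  have : l != j by apply/eqP => e; rewrite e hj in hl.
  by move/negbTE => ->; rewrite mulr0.
by apply: memv_suml => j hj; apply: memvZ; apply: hSV.
Qed.

Lemma gS_coset x z U : (gS S z U - x \in V) = (z - x \in V).
Proof.
have e : gS S z U - x = (gS S z U - z) + (z - x) by rewrite addrA subrK.
apply/idP/idP => h.
  have e2 : z - x = (gS S z U - x) - (gS S z U - z) by rewrite e [_ + (z - x)]addrC addrK.
  by rewrite e2 memvB // gS_diff.
by rewrite e memvD // gS_diff.
Qed.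

Lemma wt_gS z (U : {set 'I_m}) : U \subset S ->
  wt (gS S z U) = addn #|[set l | (l \notin S) && (z 0 l != 0)]| #|U|.
Proof.
move=> hU; rewrite /wt.
have -> : [set j | gS S z U 0 j != 0] = [set l | (l \notin S) && (z 0 l != 0)] :|: U.
  apply/setP => l; rewrite !inE !mxE.
  case: (boolP (l \in S)) => hl /=.
    by case: (l \in U); rewrite ?oner_neq0 ?eqxx.
  have : l \notin U by apply: contra hl; apply: (subsetP hU).
  by move/negbTE => ->; rewrite orbF.
rewrite cardsU.
have -> : [set l | (l \notin S) && (z 0 l != 0)] :&: U = set0.
  apply/setP => l; rewrite !inE.
  by case: (boolP (l \in U)) => h; rewrite ?andbF // (subsetP hU _ h) /=.
by rewrite cards0 subn0.
Qed.

Lemma hS_invol (p : 'rV['F_2]_m * {set 'I_m}) : p.2 \subset S -> hS S (hS S p) = p.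
Proof.
case: p => z U /= hU; rewrite /hS /=; congr (_, _).
  apply/rowP => l; rewrite !mxE.
  case: (boolP (l \in S)) => hl; rewrite ?inE ?hl ?mxE //=.
  by rewrite -F2_nat.
apply/setP => l; rewrite !inE !mxE.
case: (boolP (l \in S)) => hl /=.
  by case: (l \in U); rewrite ?oner_neq0 ?eqxx.
by apply/esym/negbTE; apply: contra hl; apply: (subsetP hU).
Qed.

Lemma hS_sub (p : 'rV['F_2]_m * {set 'I_m}) : (hS S p).2 \subset S.
Proof. by apply/subsetP => l; rewrite inE => /andP []. Qed.


Lemma card_coset x : #|[set y : 'rV['F_2]_m | y - x \in V]| = card_vs V.
Proof.
rewrite /card_vs.
have -> : [set y : 'rV['F_2]_m | y \in V] = (fun y => y - x) @: [set y | y - x \in V].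
  apply/setP => y; rewrite inE; apply/idP/imsetP.
    by move=> hy; exists (y + x); rewrite ?inE addrK.
  by case=> z; rewrite inE => hz ->.
by rewrite card_imset // => a c /addIr.
Qed.

Lemma core_count (b : nat) : (forall j, 'C(#|S|, j) <= b)%N ->
  forall x i, (cosetA V x i * 2 ^ #|S| <= card_vs V * b)%N.
Proof.
move=> hb x i.
pose T := ('rV['F_2]_m * {set 'I_m})%type.
pose P1 := [set p : T | (p.2 \subset S) && ((p.1 - x \in V) && (wt p.1 == i))].
pose P2 := [set p : T | (p.1 - x \in V) && ((p.2 \subset S) && (wt (gS S p.1 p.2) == i))].
have eA : #|P1| = (cosetA V x i * 2 ^ #|S|)%N.
  rewrite /cosetA -card_powerset -cardsX; apply: eq_card => p.
  by rewrite !inE andbC.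
have eB : #|P1| = #|P2|.
  have -> : P1 = hS S @: P2.
    apply/setP => q; rewrite inE; apply/idP/imsetP.
      move=> /andP [hq /andP [h1 h2]]; exists (hS S q); last by rewrite hS_invol.
      rewrite inE /= hS_sub gS_coset h1 /=.
      by have e := congr1 fst (hS_invol hq); rewrite /= in e; rewrite e.
    case=> p; rewrite inE => /andP [h1 /andP [h2 h3]] ->.
    by rewrite /= hS_sub /= gS_coset h1.
  apply: card_in_imset => p q; rewrite !inE => /andP [_ /andP [hp _]] /andP [_ /andP [hq _]] e.
  by rewrite -(hS_invol hp) e hS_invol.
rewrite -eA eB -sum1_card.
rewrite (eq_bigl (fun p : T => (p.1 - x \in V) && ((p.2 \subset S) && (wt (gS S p.1 p.2) == i)))); last by move=> p; rewrite inE.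
rewrite -(pair_big_dep (fun z : 'rV['F_2]_m => z - x \in V) (fun (z : 'rV['F_2]_m) (U : {set 'I_m}) => (U \subset S) && (wt (gS S z U) == i)) (fun _ _ => 1%N)) /=.
rewrite -(card_coset x) -sum1_card big_distrl /=.
rewrite [X in (_ <= X)%N](eq_bigl (fun z => z - x \in V)); last by move=> z; rewrite inE.
apply: leq_sum => z _; rewrite mul1n sum1_card.
pose w := #|[set l | (l \notin S) && (z 0 l != 0)%R]|.
apply: leq_trans (hb (i - w)%N); rewrite -cards_draws.
apply: subset_leq_card; apply/subsetP => U; rewrite /= => /andP [hU /eqP hw].
rewrite !inE hU /=; rewrite wt_gS // in hw.
by apply/eqP; rewrite -hw /w addKn.
Qed.
End Core.

Lemma wt1_sub m (V : {vspace 'rV['F_2]_m}) k : (k <= A V 1)%N ->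
  exists S : {set 'I_m}, #|S| = k /\ forall j, j \in S -> delta j \in V.
Proof.
move=> hk.
pose S0 := [set j : 'I_m | delta j \in V].
have h0 : (A V 1 <= #|S0|)%N.
  apply: leq_trans (leq_imset_card (@delta m) S0).
  apply: subset_leq_card; apply/subsetP => y; rewrite inE subr0 => /andP [hy /cards1P [j0 hj0]].
  have ey : y = delta j0.
    apply/rowP => l; rewrite [LHS]F2_nat !mxE.
    by move/setP/(_ l): hj0; rewrite !inE => ->.
  by apply/imsetP; exists j0; rewrite // inE -ey.
have : (0 < #|[set B : {set 'I_m} | B \subset S0 & #|B| == k]|)%N by rewrite cards_draws bin_gt0 (leq_trans hk h0).
case/card_gt0P => B; rewrite inE => /andP [hB /eqP hBk].
exists B; split => // j hj; have := subsetP hB j hj; by rewrite inE.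
Qed.

Lemma card_vs_gt0 m (V : {vspace 'rV['F_2]_m}) : (0 < card_vs V)%N.
Proof. by apply/card_gt0P; exists 0; rewrite inE mem0v. Qed.

Lemma alpha_bound m (V : {vspace 'rV['F_2]_m}) (S : {set 'I_m}) (b : nat) :
  (forall j, j \in S -> delta j \in V) -> (forall j, 'C(#|S|, j) <= b)%N ->
  (0 <= alpha V) && (alpha V <= b%:R / (2 ^ #|S|)%:R).
Proof.
move=> hSV hb.
have hv : (0 : rat) < (card_vs V)%:R by rewrite ltr0n card_vs_gt0.
have h2 : (0 : rat) < (2 ^ #|S|)%:R by rewrite ltr0n expn_gt0.
apply/andP; split.
  rewrite /alpha; apply: le_trans (le_bigmax _ _ ord0).
  apply: le_trans (le_bigmax _ _ 0).
  by rewrite divr_ge0.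
rewrite /alpha; apply: bigmax_le; first by rewrite divr_ge0.
move=> i _; apply: bigmax_le; first by rewrite divr_ge0.
move=> x _.
rewrite ler_pdivrMr // mulrAC ler_pdivlMr // -!natrM ler_nat.
by rewrite [(b * _)%N]mulnC (core_count hSV hb).
Qed.

Lemma rat_final (b n : nat) (eps : rat) :
  (b ^ 2 * n.*2.+1 <= 16 ^ n)%N -> 0 < eps -> eps^-2 < n%:R ->
  b%:R / (2 ^ n.*2)%:R < eps.
Proof.
move=> hb he hn.
set r := b%:R / (2 ^ n.*2)%:R : rat.
have h4 : (0 : rat) < (2 ^ n.*2)%:R by rewrite ltr0n expn_gt0.
have hr0 : 0 <= r by rewrite divr_ge0.
have hr : r ^+ 2 * (n.*2.+1)%:R <= 1.
  rewrite /r expr_div_n mulrAC ler_pdivrMr; last by rewrite exprn_gt0.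
  rewrite mul1r -!natrX -natrM ler_nat -expnM.
  have -> : (n.*2 * 2 = 4 * n)%N by lia.
  by rewrite expnM; exact: hb.
rewrite ltNge; apply/negP => hre.
have he2 : eps ^+ 2 <= r ^+ 2 by rewrite ler_pXn2r // ?nnegrE ltW.
have : eps ^+ 2 * n%:R < 1.
  apply: (lt_le_trans _ hr).
  apply: (@lt_le_trans _ _ (eps ^+ 2 * (n.*2.+1)%:R)).
    rewrite ltr_pM2l ?exprn_gt0 // ltr_nat; lia.
  by apply: ler_wpM2r.
rewrite -ltr_pdivlMl ?exprn_gt0 // mulr1 => h.
by move: (lt_trans hn h); rewrite ltxx.
Qed.

Theorem corollary2 (m : nat -> nat) (V : forall n, {vspace 'rV['F_2]_(m n)}) :
  (forall n, (0 < m n)%N) ->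
  (forall M : nat, exists N, forall n, (N <= n)%N -> (M <= A (V n) 1)%N) ->
  uniform_weight_spectrum V.
Proof.
move=> _ hA eps he.
pose n0 := Num.Def.archi_bound (eps ^- 2).
have hn : eps ^- 2 < n0%:R by apply: archi_boundP; rewrite invr_ge0 exprn_ge0 // ltW.
case: (hA n0.*2) => N hN; exists N => n hn'.
have [S [hS hSV]] := wt1_sub (hN n hn').
have hb : forall j, ('C(#|S|, j) <= 'C(n0.*2, n0))%N by move=> j; rewrite hS; apply: bin_le_center.
have /andP [h0 h1] := alpha_bound hSV hb.
rewrite ger0_norm //; apply: le_lt_trans h1 _; rewrite hS; apply: rat_final => //.
exact: bin_center.
Qed.
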